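(* Let $D$ be a semi-complete digraph containing $\overleftrightarrow{S_4}$ as a subdigraph. Then $D$ is $3$-dicritical if and only if $D$ is isomorphic to $\vec{W_3}$.
   Context: A digraph is semi-complete if every two distinct vertices are joined by at least one arc. A $2$-dicolouring is a map to $\{1,2\}$ whose colour classes induce acyclic subdigraphs. $D$ is $3$-dicritical if $D$ has no $2$-dicolouring but every proper subdigraph has one. $\overleftrightarrow{S_4}$ is the bidirected star on 4 vertices: a vertex $r$ joined by a digon (both arcs) to each of three other vertices, with no other arcs. $\vec{W_3}$ consists of a directed triangle $a\to b\to c\to a$ and a vertex $r$ joined by a digon to each of $a,b,c$. Subdigraph containment is up to isomorphism. *)

(* Defs.v *)
(* A digraph on a finite vertex type T is a loopless arc
   relation E : rel T (E x y = "there is an arc x -> y"); digons are allowed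
   (E x y && E y x), parallel arcs are not. *)
From mathcomp Require Import all_boot.
Set Implicit Arguments. Unset Strict Implicit. Unset Printing Implicit Defensive.

Section Digraphs.
Variable T : finType.

Definition loopless (E : rel T) : Prop := forall x, ~~ E x x.

Definition semicomplete (E : rel T) : Prop :=
  forall x y, x != y -> E x y || E y x.

Definition acyclic_on (F : rel T) (X : {set T}) : Prop :=
  forall s : seq T, s != [::] -> all (fun x => x \in X) s -> ~~ cycle F s.

Definition dicolouring2 (V : {set T}) (F : rel T) (c : T -> bool) : Prop :=
  forall b : bool, acyclic_on F [set x in V | c x == b].

Definition subdigraph (V : {set T}) (F : rel T) (E : rel T) : Prop :=
  forall x y, F x y -> [&& x \in V, y \in V & E x y].

Definition proper_subdigraph (V : {set T}) (F : rel T) (E : rel T) : Prop :=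
  subdigraph V F E /\ (V != setT \/ exists x y, E x y && ~~ F x y).

Definition dicritical3 (E : rel T) : Prop :=
  ~ (exists c, dicolouring2 setT E c) /\
  forall V F, proper_subdigraph V F E -> exists c, dicolouring2 V F c.

(* D contains the bidirected star S_4 as a (not necessarily induced)
   subdigraph: an injective map of {r=0,1,2,3} with digons r<->i *)
Definition contains_S4 (E : rel T) : Prop :=
  exists f : 'I_4 -> T, injective f /\
    forall i : 'I_4, i != ord0 -> E (f ord0) (f i) && E (f i) (f ord0).
End Digraphs.

(* W_3 on vertices 'I_4: r = 0, directed triangle 1 -> 2 -> 3 -> 1,
   digons between 0 and each of 1,2,3 *)
Definition W3 : rel 'I_4 := fun i j =>
  let a := nat_of_ord i in let b := nat_of_ord j in
  ((a == 0) && (b != 0)) || ((b == 0) && (a != 0)) ||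
  ((a == 1) && (b == 2)) || ((a == 2) && (b == 3)) || ((a == 3) && (b == 1)).

Definition iso_W3 (T : finType) (E : rel T) : Prop :=
  exists g : 'I_4 -> T, bijective g /\ forall i j, E (g i) (g j) = W3 i j.

(* Main.v *)
Require Import Defs.
From mathcomp Require Import all_boot.
Set Implicit Arguments. Unset Strict Implicit. Unset Printing Implicit Defensive.

Definition RS (T : finType) (F : rel T) (S : {set T}) : rel T :=
  fun u v => [&& u \in S, v \in S & F u v].

Lemma path_RS (T : finType) (F : rel T) (S : {set T}) x p : x \in S ->
  all (fun z => z \in S) p -> path F x p -> path (RS F S) x p.
Proof.
elim: p x => //= y p IH x xS /andP[yS pS] /andP[Fxy Hp].
by rewrite /RS xS yS Fxy /= IH.
Qed.

Lemma path_RS_in (T : finType) (F : rel T) (S : {set T}) x p : path (RS F S) x p ->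
  all (fun z => z \in S) p /\ path F x p.
Proof.
elim: p x => //= y p IH x /andP[/and3P[_ yS Fxy] Hp].
by case: (IH _ Hp) => A B; rewrite yS Fxy A B.
Qed.

Lemma cyc_to_conn (T : finType) (F : rel T) (S : {set T}) s : s != [::] ->
  all (fun z => z \in S) s -> cycle F s ->
  exists x y, [/\ x \in S, y \in S, F x y & connect (RS F S) y x].
Proof.
case: s => // y p _ Hall; move: (Hall) => /= /andP[yS pS].
rewrite rcons_path => /andP[Hp Fl].
exists (last y p), y; split => //.
  exact: (allP Hall _ (mem_last y p)).
apply/connectP; exists p => //; exact: path_RS.
Qed.

Lemma conn_to_cyc (T : finType) (F : rel T) (S : {set T}) x y : x \in S -> y \in S ->
  F x y -> connect (RS F S) y x -> ~ acyclic_on F S.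
Proof.
move=> xS yS Fxy /connectP[p Hp Hl] Hac.
case: (path_RS_in Hp) => pS Hp'.
have := Hac (y :: p) isT; rewrite /= yS pS => /(_ isT).
by rewrite rcons_path Hp' -Hl Fxy.
Qed.

Lemma rank_acyclic (T : finType) (F : rel T) (S : {set T}) (rho : T -> nat) :
  (forall x y, x \in S -> y \in S -> F x y -> rho x < rho y) -> acyclic_on F S.
Proof.
move=> Hr s Hne Hall; apply/negP => Hc.
case: (cyc_to_conn Hne Hall Hc) => x [y [xS yS Fxy Hc']].
have : rho y <= rho x.
  move/connectP: Hc' => [p Hp ->].
  elim: p y yS Hp {Fxy} => //= z p IH y yS /andP[/and3P[_ zS Fyz] Hp].
  exact: leq_trans (ltnW (Hr _ _ yS zS Fyz)) (IH _ zS Hp).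
by rewrite leqNgt (Hr _ _ xS yS Fxy).
Qed.

Lemma digon_diff (T : finType) (V : {set T}) (F : rel T) c u v :
  dicolouring2 V F c -> u \in V -> v \in V -> F u v -> F v u -> c u != c v.
Proof.
move=> Hc uV vV Fuv Fvu; apply/negP => /eqP Heq.
move: (Hc (c u) [:: u; v] isT).
rewrite /= !inE uV vV -Heq eqxx /= Fuv Fvu.
by move/(_ isT).
Qed.

Lemma trans_contra (T : finType) (E : rel T) r s m t :
  dicritical3 E -> r != s -> r != t -> r != m -> m != s -> m != t ->
  E r s -> E s r -> E r m -> E m r -> E r t -> E t r ->
  E s m -> E m t -> E s t -> False.
Proof.
move=> [Hnc Hcrit] rs rt rm ms mt Ers Esr Erm Emr Ert Etr Esm Emt Est.
pose F := fun x y => E x y && ~~ ((x == s) && (y == t)).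
have [c Hc] : exists c, dicolouring2 setT F c.
  apply: Hcrit; split.
    by move=> x y /andP[Exy _]; rewrite !inE Exy.
  by right; exists s, t; rewrite /F Est !eqxx.
have Fsm : F s m by rewrite /F Esm eqxx (negbTE mt).
have Fmt : F m t by rewrite /F Emt (negbTE ms).
have F1 x : E r x -> F r x by move=> H; rewrite /F H (negbTE rs).
have F2 x : E x r -> F x r by move=> H; rewrite /F H (negbTE rt) andbF.
have cs : c s != c r by apply: digon_diff Hc _ _ (F2 _ Esr) (F1 _ Ers); rewrite inE.
have cm : c m != c r by apply: digon_diff Hc _ _ (F2 _ Emr) (F1 _ Erm); rewrite inE.
have ct : c t != c r by apply: digon_diff Hc _ _ (F2 _ Etr) (F1 _ Ert); rewrite inE.
have cms : c m = c s by move: cs cm; case: (c s); case: (c m); case: (c r).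
have cts : c t = c s by move: cs ct; case: (c s); case: (c t); case: (c r).
apply: Hnc; exists c => b p Hne Hall; apply/negP => Hcyc.
pose S := [set x in setT | c x == b].
have [x [y [xS yS Exy Hconn]]] := cyc_to_conn Hne Hall Hcyc.
have mS : s \in S -> m \in S by rewrite !inE cms.
have Hsub : subrel (connect (RS E S)) (connect (RS F S)).
  apply: connect_sub => u v /and3P[uS vS Euv].
  case Huv: ((u == s) && (v == t)).
    move/andP: Huv => [/eqP eu /eqP ev]; subst u v.
    apply: connect_trans (connect1 (_ : RS F S s m)) (connect1 (_ : RS F S m t)).
      by rewrite /RS uS mS.
    by rewrite /RS vS mS.
  by apply: connect1; rewrite /RS uS vS /F Euv Huv.
have Hac := Hc b.
case Hxy: ((x == s) && (y == t)).
  move/andP: Hxy => [/eqP ex /eqP ey]; subst x y.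
  apply: (conn_to_cyc xS (mS xS) Fsm _ Hac).
  apply: connect_trans (connect1 (_ : RS F S m t)) (Hsub _ _ Hconn).
  by rewrite /RS yS mS.
by apply: (conn_to_cyc xS yS _ (Hsub _ _ Hconn) Hac); rewrite /F Exy Hxy.
Qed.

Lemma no_leaf_digon (T : finType) (E : rel T) r u v w :
  dicritical3 E -> w != r -> w != u -> w != v ->
  E r u -> E u r -> E r v -> E v r -> E u v -> E v u -> False.
Proof.
move=> [_ Hcrit] wr wu wv Eru Eur Erv Evr Euv Evu.
pose V := [set r; u; v].
pose F := fun x y => [&& x \in V, y \in V & E x y].
have [c Hc] : exists c, dicolouring2 V F c.
  apply: Hcrit; split.
    by move=> x y /and3P[-> -> ->].
  left; apply/negP => /eqP HV.
  have : w \in V by rewrite HV inE.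
  by rewrite !inE (negbTE wr) (negbTE wu) (negbTE wv).
have rV : r \in V by rewrite !inE eqxx.
have uV : u \in V by rewrite !inE eqxx orbT.
have vV : v \in V by rewrite !inE eqxx !orbT.
have h1 := digon_diff Hc uV rV (_ : F u r) (_ : F r u).
have h2 := digon_diff Hc vV rV (_ : F v r) (_ : F r v).
have h3 := digon_diff Hc uV vV (_ : F u v) (_ : F v u).
move: h1 h2 h3; rewrite /F uV vV rV Eur Eru Evr Erv Euv Evu.
by case: (c u); case: (c v); case: (c r); move=> /(_ isT isT) + /(_ isT isT) + /(_ isT isT).
Qed.

Lemma cyc_iso (T : finType) (E : rel T) r p q s :
  loopless E -> dicritical3 E ->
  r != p -> r != q -> r != s -> p != q -> p != s -> q != s ->
  E r p -> E p r -> E r q -> E q r -> E r s -> E s r ->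
  E p q -> E q s -> E s p -> ~~ E q p -> ~~ E s q -> ~~ E p s -> iso_W3 E.
Proof.
move=> Hl [_ Hcrit] rp rq rs pq ps qs Erp Epr Erq Eqr Ers Esr Epq Eqs Esp
  nqp nsq nps.
pose X := [set r; p; q; s].
pose F := fun x y => [&& x \in X, y \in X & E x y].
have rX : r \in X by rewrite !inE eqxx.
have pX : p \in X by rewrite !inE eqxx !orbT.
have qX : q \in X by rewrite !inE eqxx !orbT.
have sX : s \in X by rewrite !inE eqxx !orbT.
have HX : X = setT.
  apply/eqP; apply/negPn/negP => HX.
  have [c Hc] : exists c, dicolouring2 X F c.
    apply: Hcrit; split; last by left.
    by move=> x y /and3P[-> -> ->].
  have h1 := digon_diff Hc pX rX (_ : F p r) (_ : F r p).
  have h2 := digon_diff Hc qX rX (_ : F q r) (_ : F r q).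
  have h3 := digon_diff Hc sX rX (_ : F s r) (_ : F r s).
  move: h1 h2 h3; rewrite /F pX qX sX rX Epr Erp Eqr Erq Esr Ers.
  move=> /(_ isT isT) h1 /(_ isT isT) h2 /(_ isT isT) h3.
  have hq : c q = c p by move: h1 h2; case: (c p); case: (c q); case: (c r).
  have hs : c s = c p by move: h1 h3; case: (c p); case: (c s); case: (c r).
  move: (Hc (c p) [:: p; q; s] isT).
  rewrite /= /F !inE hq hs !eqxx ?orbT /= Epq Eqs Esp.
  by move=> /(_ isT).
have Hall x : [|| x == r, x == p, x == q | x == s].
  by move: (in_setT x); rewrite -HX !inE -!orbA.
pose g (i : 'I_4) := nth r [:: r; p; q; s] i.
pose h (x : T) : 'I_4 :=
  inord (if x == r then 0 else if x == p then 1 else if x == q then 2 else 3).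
have e1 : (p == r) = false by rewrite eq_sym (negbTE rp).
have e2 : (q == r) = false by rewrite eq_sym (negbTE rq).
have e3 : (s == r) = false by rewrite eq_sym (negbTE rs).
have e4 : (q == p) = false by rewrite eq_sym (negbTE pq).
have e5 : (s == p) = false by rewrite eq_sym (negbTE ps).
have e6 : (s == q) = false by rewrite eq_sym (negbTE qs).
exists g; split.
  exists h.
    move=> [[|[|[|[|i]]]] Hi] //; apply/val_inj;
      by rewrite /h /g /= ?eqxx ?e1 ?e2 ?e3 ?e4 ?e5 ?e6 inordK.
  move=> x; rewrite /h.
  case: ifP => [/eqP -> | xr]; first by rewrite /g inordK.
  case: ifP => [/eqP -> | xp]; first by rewrite /g inordK.
  case: ifP => [/eqP -> | xq]; first by rewrite /g inordK.
  by move: (Hall x); rewrite xr xp xq /= => /eqP ->; rewrite /g inordK.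
have Ho x : E x x = false by apply/negbTE/Hl.
move=> [[|[|[|[|i]]]] Hi] [[|[|[|[|j]]]] Hj] //;
  by rewrite /g /W3 /= ?Ho ?Erp ?Epr ?Erq ?Eqr ?Ers ?Esr ?Epq ?Eqs ?Esp
     ?(negbTE nqp) ?(negbTE nsq) ?(negbTE nps).
Qed.

Definition bf (a b c d : bool) (i : 'I_4) : bool := nth a [:: a; b; c; d] i.
Definition nf (a b c d : nat) (i : 'I_4) : nat := nth a [:: a; b; c; d] i.

Lemma vert_ok (k : 'I_4) : exists (col : 'I_4 -> bool) (rk : 'I_4 -> nat),
  forall i j, i != k -> j != k -> W3 i j -> col i = col j -> rk i < rk j.
Proof.
case: k => [[|[|[|[|k]]]] Hk] //.
- exists (bf true false true true), (nf 0 1 2 3).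
  by move=> [[|[|[|[|i]]]] Hi] [[|[|[|[|j]]]] Hj].
- exists (bf true false false false), (nf 0 1 2 3).
  by move=> [[|[|[|[|i]]]] Hi] [[|[|[|[|j]]]] Hj].
- exists (bf true false false false), (nf 0 1 2 0).
  by move=> [[|[|[|[|i]]]] Hi] [[|[|[|[|j]]]] Hj].
- exists (bf true false false false), (nf 0 1 2 3).
  by move=> [[|[|[|[|i]]]] Hi] [[|[|[|[|j]]]] Hj].
Qed.

Lemma arc_ok (a b : 'I_4) : W3 a b -> exists (col : 'I_4 -> bool) (rk : 'I_4 -> nat),
  forall i j, W3 i j -> ~~ ((i == a) && (j == b)) -> col i = col j -> rk i < rk j.
Proof.
case: a => [[|[|[|[|a]]]] Ha] //; case: b => [[|[|[|[|b]]]] Hb] // _.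
- exists (bf true true false false), (nf 1 0 0 1).
  by move=> [[|[|[|[|i]]]] Hi] [[|[|[|[|j]]]] Hj].
- exists (bf true false true false), (nf 1 1 0 0).
  by move=> [[|[|[|[|i]]]] Hi] [[|[|[|[|j]]]] Hj].
- exists (bf true false false true), (nf 1 0 1 0).
  by move=> [[|[|[|[|i]]]] Hi] [[|[|[|[|j]]]] Hj].
- exists (bf true true false false), (nf 0 1 0 1).
  by move=> [[|[|[|[|i]]]] Hi] [[|[|[|[|j]]]] Hj].
- exists (bf true false false false), (nf 0 2 0 1).
  by move=> [[|[|[|[|i]]]] Hi] [[|[|[|[|j]]]] Hj].
- exists (bf true false true false), (nf 0 1 1 0).
  by move=> [[|[|[|[|i]]]] Hi] [[|[|[|[|j]]]] Hj].
- exists (bf true false false false), (nf 0 1 2 0).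
  by move=> [[|[|[|[|i]]]] Hi] [[|[|[|[|j]]]] Hj].
- exists (bf true false false true), (nf 0 0 1 1).
  by move=> [[|[|[|[|i]]]] Hi] [[|[|[|[|j]]]] Hj].
- exists (bf true false false false), (nf 0 1 2 3).
  by move=> [[|[|[|[|i]]]] Hi] [[|[|[|[|j]]]] Hj].
Qed.

Lemma colour_from (T : finType) (E : rel T) (g : 'I_4 -> T) (h : T -> 'I_4)
  (V : {set T}) (F : rel T) (P : 'I_4 -> 'I_4 -> bool) (col : 'I_4 -> bool) (rk : 'I_4 -> nat) :
  cancel h g -> (forall i j, E (g i) (g j) = W3 i j) -> subdigraph V F E ->
  (forall x y, x \in V -> y \in V -> F x y -> P (h x) (h y)) ->
  (forall i j, W3 i j -> P i j -> col i = col j -> rk i < rk j) ->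
  exists c, dicolouring2 V F c.
Proof.
move=> hg HE Hsub HP Hw; exists (fun x => col (h x)) => b.
apply: (rank_acyclic (rho := fun x => rk (h x))) => x y.
rewrite !inE => /andP[xV /eqP cx] /andP[yV /eqP cy] Fxy.
apply: Hw; last by rewrite cx cy.
  by move: (Hsub _ _ Fxy) => /and3P[_ _]; rewrite -{1}(hg x) -{1}(hg y) HE.
exact: HP.
Qed.

Theorem lemma20 (T : finType) (E : rel T) :
  loopless E -> semicomplete E -> contains_S4 E ->
  (dicritical3 E <-> iso_W3 E).
Proof.
move=> Hl Hsc [f [finj Hf]]; split.
  move=> Hd.
  pose o1 := @Ordinal 4 1 isT. pose o2 := @Ordinal 4 2 isT. pose o3 := @Ordinal 4 3 isT.
  have /andP[E01 E10] := Hf o1 isT.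
  have /andP[E02 E20] := Hf o2 isT.
  have /andP[E03 E30] := Hf o3 isT.
  have d01 : f ord0 != f o1 by rewrite (inj_eq finj).
  have d02 : f ord0 != f o2 by rewrite (inj_eq finj).
  have d03 : f ord0 != f o3 by rewrite (inj_eq finj).
  have d12 : f o1 != f o2 by rewrite (inj_eq finj).
  have d13 : f o1 != f o3 by rewrite (inj_eq finj).
  have d23 : f o2 != f o3 by rewrite (inj_eq finj).
  have d10 := d01; rewrite eq_sym in d10. have d20 := d02; rewrite eq_sym in d20.
  have d30 := d03; rewrite eq_sym in d30. have d21 := d12; rewrite eq_sym in d21.
  have d31 := d13; rewrite eq_sym in d31. have d32 := d23; rewrite eq_sym in d32.
  have nd12 : ~~ (E (f o1) (f o2) && E (f o2) (f o1)).
    by apply/negP => /andP[h1 h2]; apply: (no_leaf_digon Hd d30 d31 d32 E01 E10 E02 E20 h1 h2).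
  have nd13 : ~~ (E (f o1) (f o3) && E (f o3) (f o1)).
    by apply/negP => /andP[h1 h2]; apply: (no_leaf_digon Hd d20 d21 d23 E01 E10 E03 E30 h1 h2).
  have nd23 : ~~ (E (f o2) (f o3) && E (f o3) (f o2)).
    by apply/negP => /andP[h1 h2]; apply: (no_leaf_digon Hd d10 d12 d13 E02 E20 E03 E30 h1 h2).
  have s12 := Hsc _ _ d12. have s13 := Hsc _ _ d13. have s23 := Hsc _ _ d23.
  case e12: (E (f o1) (f o2)); rewrite e12 /= in nd12 s12;
  case e23: (E (f o2) (f o3)); rewrite e23 /= in nd23 s23;
  case e13: (E (f o1) (f o3)); rewrite e13 /= in nd13 s13.
  - by case: (trans_contra Hd d01 d03 d02 d21 d23 E01 E10 E02 E20 E03 E30 e12 e23 e13).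
  - exact: (cyc_iso Hl Hd d01 d02 d03 d12 d13 d23 E01 E10 E02 E20 E03 E30 e12 e23 s13 nd12 nd23 (negbT e13)).
  - by case: (trans_contra Hd d01 d02 d03 d31 d32 E01 E10 E03 E30 E02 E20 e13 s23 e12).
  - by case: (trans_contra Hd d03 d02 d01 d13 d12 E03 E30 E01 E10 E02 E20 s13 e12 s23).
  - by case: (trans_contra Hd d02 d03 d01 d12 d13 E02 E20 E01 E10 E03 E30 s12 e13 e23).
  - by case: (trans_contra Hd d02 d01 d03 d32 d31 E02 E20 E03 E30 E01 E10 e23 s13 s12).
  - exact: (cyc_iso Hl Hd d01 d03 d02 d13 d12 d32 E01 E10 E03 E30 E02 E20 e13 s23 s12 nd13 (negbT e23) (negbT e12)).
  - by case: (trans_contra Hd d03 d01 d02 d23 d21 E03 E30 E02 E20 E01 E10 s23 s12 s13).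
move=> [g [[h gh hg] HE]].
pose o0 := @Ordinal 4 0 isT.
pose o1 := @Ordinal 4 1 isT. pose o2 := @Ordinal 4 2 isT. pose o3 := @Ordinal 4 3 isT.
split.
  move=> [c Hc].
  have Hd i j : W3 i j -> W3 j i -> c (g i) != c (g j).
    by move=> h1 h2; apply: (digon_diff Hc); rewrite ?inE ?HE.
  have h1 := Hd o1 o0 isT isT. have h2 := Hd o2 o0 isT isT.
  have h3 := Hd o3 o0 isT isT.
  have c2 : c (g o2) = c (g o1) by move: h1 h2; case: (c (g o1)); case: (c (g o2)); case: (c (g o0)).
  have c3 : c (g o3) = c (g o1) by move: h1 h3; case: (c (g o1)); case: (c (g o3)); case: (c (g o0)).
  move: (Hc (c (g o1)) [:: g o1; g o2; g o3] isT).
  by rewrite /= !inE c2 c3 eqxx !HE => /(_ isT).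
move=> V F [Hsub [HV | [x0 [y0 /andP[Exy nFxy]]]]].
  have [v vV] : exists v, v \notin V.
    case: (pickP (fun v => v \notin V)) => [v Hv | H]; first by exists v.
    exfalso; move/negP: HV; apply; apply/eqP/setP => z; rewrite inE.
    by move: (H z) => /= /negbFE.
  have [col [rk Hw]] := vert_ok (h v).
  apply: (colour_from (P := fun i j => (i != h v) && (j != h v)) hg HE Hsub _ (fun i j w p => Hw i j (proj1 (andP p)) (proj2 (andP p)) w)).
  move=> x y xV yV _; apply/andP; split; apply/negP => /eqP/(can_inj hg) e; subst.
    by rewrite xV in vV.
  by rewrite yV in vV.
have Wab : W3 (h x0) (h y0) by rewrite -HE !hg.
have [col [rk Hw]] := arc_ok Wab.
apply: (colour_from (P := fun i j => ~~ ((i == h x0) && (j == h y0))) hg HE Hsub _ Hw).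
move=> x y _ _ Fxy; apply/negP => /andP[/eqP/(can_inj hg) ex /eqP/(can_inj hg) ey]; subst.
by rewrite Fxy in nFxy.
Qed.
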